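(* Let $p,q,r$ be pairwise distinct primes with $p<q$ and $p<r$. Let $q',r'\in\{1,\dots,p-1\}$ be the inverses of $q,r$ modulo $p$, and let $M=\max\{q',r'\}$, $m=\min\{q',r'\}$. Then for every integer $k$, $$F_k-F_{k-q}-F_{k-r}+F_{k-q-r}=\begin{cases}0,& a_k<M+m-p,\\ -1,& M+m-p\le a_k<m,\\ 0,& m\le a_k<M,\\ 1,& M\le a_k<M+m,\\ 0,& M+m\le a_k.\end{cases}$$ More generally, let $(t,u,v)$ be any permutation of $(p,q,r)$, let $x_k$ denote $a_k$, $b_k$ or $c_k$ according as $t=p$, $t=q$ or $t=r$, let $u',v'\in\{1,\dots,t-1\}$ be the inverses of $u,v$ modulo $t$, and $M=\max\{u',v'\}$, $m=\min\{u',v'\}$. Then the same formula holds for $F_k-F_{k-u}-F_{k-v}+F_{k-u-v}$ with $a_k$ replaced by $x_k$ and $p$ replaced by $t$.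
   Context: For each integer $k$, let $a_k,b_k,c_k$ be the unique integers with $0\le a_k<p$, $0\le b_k<q$, $0\le c_k<r$ and $k\equiv a_kqr+b_krp+c_kpq \pmod{pqr}$, and define $F_k=\frac{a_k}{p}+\frac{b_k}{q}+\frac{c_k}{r}-\frac{k}{pqr}$. *)

(* Defs.v *)
From HB Require Import structures.
From mathcomp Require Import all_boot all_order all_algebra.
Unset Printing Implicit Defensive.
Import Order.TTheory GRing.Theory Num.Theory.
Local Open Scope ring_scope.

Definition rep_ok (p q r : nat) (k : int) (t : 'I_p * 'I_q * 'I_r) : bool :=
  ((k - ((t.1.1 : nat) * (q * r) + (t.1.2 : nat) * (r * p) + (t.2 : nat) * (p * q))%N%:Z)
      %% (p * q * r)%N%:Z == 0)%Z.

(* "the unique" triple (a_k,b_k,c_k): we pick one satisfying the defining property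
   (it is unique for pairwise distinct primes p,q,r). *)
Definition abc (p q r : nat) (k : int) : nat * nat * nat :=
  match [pick t : ('I_p * 'I_q * 'I_r)%type | rep_ok p q r k t] with
  | Some t => ((t.1.1 : nat), (t.1.2 : nat), (t.2 : nat))
  | None => (0%N, 0%N, 0%N)
  end.

Definition a_ (p q r : nat) (k : int) : nat := (abc p q r k).1.1.
Definition b_ (p q r : nat) (k : int) : nat := (abc p q r k).1.2.
Definition c_ (p q r : nat) (k : int) : nat := (abc p q r k).2.

Definition F (p q r : nat) (k : int) : rat :=
  (a_ p q r k)%:R / p%:R + (b_ p q r k)%:R / q%:R + (c_ p q r k)%:R / r%:R
  - k%:~R / (p * q * r)%N%:R.

(* Main.v *)
Require Import Defs.
From Stdlib Require Import ZArith Lia.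
From HB Require Import structures.
From mathcomp Require Import all_boot all_order all_algebra.
Import Order.TTheory GRing.Theory Num.Theory.
Local Open Scope ring_scope.

Delimit Scope Z_scope with ZZ.
Opaque Z.add Z.opp Z.of_nat Z.sub Z.mul.
Definition zI (z : int) : Z :=
  match z with Posz n => Z.of_nat n | Negz n => (- Z.of_nat n.+1)%ZZ end.

Lemma zI_nat (n : nat) : zI n%:Z = Z.of_nat n. Proof. by []. Qed.

Lemma zI_opp (x : int) : zI (- x) = (- zI x)%ZZ.
Proof. case: x => [[|n]|n] /=; lia. Qed.

Lemma zI_add (x y : int) : zI (x + y) = (zI x + zI y)%ZZ.
Proof.
case: x => m; case: y => n /=; rewrite /GRing.add /=.
- rewrite -plusE; lia.
- case: ltnP => /= [/ssrnat.ltP|/ssrnat.leP] h; rewrite -?minusE /=; lia.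
- case: ltnP => /= [/ssrnat.ltP|/ssrnat.leP] h; rewrite -?minusE /=; lia.
- rewrite -plusE; lia.
Qed.

Lemma zI_sub (x y : int) : zI (x - y) = (zI x - zI y)%ZZ.
Proof. by rewrite zI_add zI_opp. Qed.

Lemma zI_mul (x y : int) : zI (x * y) = (zI x * zI y)%ZZ.
Proof.
case: x => m; case: y => n; rewrite /GRing.mul /=.
- by rewrite -multE Nat2Z.inj_mul.
- rewrite zI_opp /= -multE Nat2Z.inj_mul; lia.
- rewrite zI_opp /= -multE Nat2Z.inj_mul; lia.
- rewrite -multE Nat2Z.inj_mul; lia.
Qed.

Lemma zI_inj (x y : int) : zI x = zI y -> x = y.
Proof.
case: x => m; case: y => n /= h; try lia.
- by congr Posz; lia.
- by congr Negz; lia.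
Qed.

Lemma zI_pos (z : int) : (0 < z) <-> (0 < zI z)%ZZ.
Proof. case: z => [n|n] /=; rewrite ?ltz_nat; split => h //; try lia.
  - by move/ssrnat.ltP: h; lia. - by apply/ssrnat.ltP; lia. Qed.

Lemma zI_nneg (z : int) : (0 <= z) <-> (0 <= zI z)%ZZ.
Proof. case: z => [n|n] /=; split => h //; lia. Qed.

Lemma zI_lt (x y : int) : (x < y) <-> (zI x < zI y)%ZZ.
Proof. rewrite -subr_gt0 zI_pos zI_sub; lia. Qed.

Lemma zI_le (x y : int) : (x <= y) <-> (zI x <= zI y)%ZZ.
Proof. rewrite -subr_ge0 zI_nneg zI_sub; lia. Qed.
Transparent Z.add Z.opp Z.of_nat Z.sub Z.mul.

Lemma zI_0 : zI 0 = 0%ZZ. Proof. by []. Qed.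
Lemma zI_1 : zI 1 = 1%ZZ. Proof. by []. Qed.
Lemma zI_natD (a b : nat) : zI (a + b)%N%:Z = (zI a%:Z + zI b%:Z)%ZZ.
Proof. by rewrite PoszD zI_add. Qed.
Lemma zI_natM (a b : nat) : zI (a * b)%N%:Z = (zI a%:Z * zI b%:Z)%ZZ.
Proof. by rewrite PoszM zI_mul. Qed.

Lemma maxnE' (a b : nat) : maxn a b = Nat.max a b.
Proof. rewrite /maxn; case: ltnP => [/ssrnat.ltP|/ssrnat.leP] h; lia. Qed.
Lemma minnE' (a b : nat) : minn a b = Nat.min a b.
Proof. rewrite /minn; case: ltnP => [/ssrnat.ltP|/ssrnat.leP] h; lia. Qed.

Ltac zsimp := rewrite ?(zI_natD, zI_natM, zI_sub, zI_add, zI_mul, zI_opp, zI_0, zI_1, zI_nat, maxnE', minnE').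
Ltac iarith := apply: zI_inj; zsimp; first [ring | lia | nia].

Lemma Zbound (n x y c : Z) : (0 <= x < n)%ZZ -> (0 <= y < n)%ZZ -> (x - y = c * n)%ZZ -> x = y.
Proof. move=> hx hy h. have : (-1 < c < 1)%ZZ by nia. nia. Qed.

Lemma bounded_eq (n x y : nat) : (n%:Z %| x%:Z - y%:Z)%Z -> (x < n)%N -> (y < n)%N -> x = y.
Proof.
move=> /dvdzP [c hc] /ssrnat.ltP hx /ssrnat.ltP hy.
apply: Nat2Z.inj; apply: (@Zbound (Z.of_nat n) _ _ (zI c)); try lia.
by rewrite -!zI_nat -zI_mul -zI_sub hc.
Qed.

Lemma eqmod_dvd (t a b : nat) : (a = b %[mod t])%N -> (t%:Z %| a%:Z - b%:Z)%Z.
Proof. by move=> h; rewrite -eqz_mod_dvd !modz_nat h. Qed.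

Definition N3 {p q r : nat} (t : 'I_p * 'I_q * 'I_r) : nat :=
  (t.1.1 * (q * r) + t.1.2 * (r * p) + t.2 * (p * q))%N.

Lemma rep_okE p q r k t : rep_ok p q r k t = ((p*q*r)%N%:Z %| k - (N3 t)%:Z)%Z.
Proof. by apply/eqP/dvdz_mod0P. Qed.

Lemma coprimez_nat (a b : nat) : coprimez a%:Z b%:Z = coprime a b.
Proof. by rewrite coprimezE. Qed.

Lemma dvdz_natE (a b : nat) : (a%:Z %| b%:Z)%Z = (a %| b)%N.
Proof. by rewrite dvdzE. Qed.

Lemma comp_eq (n w x y : nat) (z : int) : coprime w n -> (x < n)%N -> (y < n)%N ->
  (n%:Z %| (x%:Z - y%:Z) * w%:Z + n%:Z * z)%Z -> x = y.
Proof.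
move=> cwn hx hy h.
have h2 : (n%:Z %| n%:Z * z)%Z by apply: dvdz_mulr; apply: dvdzz.
have h3 : (n%:Z %| (x%:Z - y%:Z) * w%:Z)%Z.
  by rewrite -[X in (_ %| X)%Z](addrK (n%:Z * z)); apply: rpredB.
move: h3; rewrite Gauss_dvdzl ?coprimez_nat 1?coprime_sym // => h3.
exact: bounded_eq h3 hx hy.
Qed.

Lemma prime_coprime2 (n a b : nat) : prime n -> prime a -> prime b -> n != a -> n != b ->
  coprime (a * b) n.
Proof.
move=> pn pa pb na nb; rewrite coprimeMl; apply/andP; split;
  rewrite coprime_sym prime_coprime // dvdn_prime2 //.
Qed.

Lemma rep_exists p q r k : prime p -> prime q -> prime r ->
  p != q -> q != r -> p != r -> exists t, rep_ok p q r k t.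
Proof.
move=> pp pq pr hpq hqr hpr.
have p0 := prime_gt0 pp; have q0 := prime_gt0 pq; have r0 := prime_gt0 pr.
set W := (p * q * r)%N.
have W0 : (0 < W)%N by rewrite !muln_gt0 p0 q0 r0.
pose f (t : 'I_p * 'I_q * 'I_r) : 'I_W := Ordinal (ltn_pmod (N3 t) W0).
have finj : injective f.
  move=> t1 t2 /(congr1 val) /= h.
  have hW : (W%:Z %| (N3 t1)%:Z - (N3 t2)%:Z)%Z by apply: eqmod_dvd.
  case: t1 h hW => [[a1 b1] c1]; case: t2 => [[a2 b2] c2] /= h hW.
  have hp : (p%:Z %| W%:Z)%Z by rewrite dvdz_natE /W -mulnA; apply/dvdn_mulr/dvdnn.
  have hq : (q%:Z %| W%:Z)%Z by rewrite dvdz_natE /W mulnAC; apply/dvdn_mull/dvdnn.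
  have hr : (r%:Z %| W%:Z)%Z by rewrite dvdz_natE /W; apply/dvdn_mull/dvdnn.
  have ea : a1 = a2 :> nat.
    apply: (@comp_eq p (q * r) _ _ ((b1%:Z - b2%:Z) * r%:Z + (c1%:Z - c2%:Z) * q%:Z)) => //.
    - by apply: prime_coprime2.
    - have -> : ((a1%:Z - a2%:Z) * (q * r)%N%:Z + p%:Z * ((b1%:Z - b2%:Z) * r%:Z + (c1%:Z - c2%:Z) * q%:Z))
             = (N3 (a1, b1, c1))%:Z - (N3 (a2, b2, c2))%:Z by rewrite /N3 /=; iarith.
      exact: dvdz_trans hp hW.
  have eb : b1 = b2 :> nat.
    apply: (@comp_eq q (r * p) _ _ ((a1%:Z - a2%:Z) * r%:Z + (c1%:Z - c2%:Z) * p%:Z)) => //.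
    - by apply: prime_coprime2 => //; rewrite eq_sym.
    - have -> : ((b1%:Z - b2%:Z) * (r * p)%N%:Z + q%:Z * ((a1%:Z - a2%:Z) * r%:Z + (c1%:Z - c2%:Z) * p%:Z))
             = (N3 (a1, b1, c1))%:Z - (N3 (a2, b2, c2))%:Z by rewrite /N3 /=; iarith.
      exact: dvdz_trans hq hW.
  have ec : c1 = c2 :> nat.
    apply: (@comp_eq r (p * q) _ _ ((a1%:Z - a2%:Z) * q%:Z + (b1%:Z - b2%:Z) * p%:Z)) => //.
    - by apply: prime_coprime2 => //; rewrite eq_sym.
    - have -> : ((c1%:Z - c2%:Z) * (p * q)%N%:Z + r%:Z * ((a1%:Z - a2%:Z) * q%:Z + (b1%:Z - b2%:Z) * p%:Z))
             = (N3 (a1, b1, c1))%:Z - (N3 (a2, b2, c2))%:Z by rewrite /N3 /=; iarith.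
      exact: dvdz_trans hr hW.
  by rewrite (val_inj ea) (val_inj eb) (val_inj ec).
have hW0 : (W%:Z != 0) by rewrite eqz_nat -lt0n.
have km : (`|(k %% W%:Z)%Z|%N < W)%N.
  by rewrite -ltz_nat gez0_abs ?modz_ge0 // ltz_pmod // ltz_nat.
have := @inj_card_onto _ _ f finj; rewrite !card_prod !card_ord => /(_ (leqnn _) (Ordinal km)).
case/codomP => t /(congr1 val) /= ht.
exists t; rewrite rep_okE -eqz_mod_dvd.
by apply/eqP; rewrite modz_nat -ht gez0_abs ?modz_ge0 // modz_mod.
Qed.

Definition coord (p q r n : nat) (k : int) : nat :=
  if n == p then a_ p q r k else if n == q then b_ p q r k else c_ p q r k.

Lemma coord_prop p q r k n w : prime p -> prime q -> prime r ->
  p != q -> q != r -> p != r -> n \in [:: p; q; r] -> (w * n = p * q * r)%N ->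
  (coord p q r n k < n)%N /\ (n%:Z %| (coord p q r n k)%:Z * w%:Z - k)%Z.
Proof.
move=> pp pq pr hpq hqr hpr hn hw.
have p0 := prime_gt0 pp; have q0 := prime_gt0 pq; have r0 := prime_gt0 pr.
have [t0 Ht0] := rep_exists p q r k pp pq pr hpq hqr hpr.
rewrite /coord /a_ /b_ /c_ /abc; case: pickP => [t Ht | H]; last by move: (H t0); rewrite Ht0.
rewrite rep_okE in Ht; move: Ht; case: t => [[a b] c] /= Ht.
have hdiv : forall d : nat, (d %| p * q * r)%N -> (d%:Z %| k - (N3 (a, b, c))%:Z)%Z.
  by move=> d hd; apply: dvdz_trans Ht; rewrite dvdz_natE.
move: hn; rewrite !inE => /or3P [/eqP En|/eqP En|/eqP En]; subst n.
- rewrite eqxx; split; first exact: ltn_ord.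
  have ew : w = (q * r)%N.
    apply/eqP; rewrite -(eqn_pmul2r p0) hw; apply/eqP; rewrite -!multE; lia.
  have -> : (a%:Z * w%:Z - k) = - (k - (N3 (a, b, c))%:Z) - p%:Z * (b%:Z * r%:Z + c%:Z * q%:Z).
    by rewrite ew /N3 /=; iarith.
  apply: rpredB; first by rewrite rpredN; apply: hdiv; rewrite -mulnA; apply/dvdn_mulr/dvdnn.
  by apply: dvdz_mulr; apply: dvdzz.
- rewrite eq_sym (negbTE hpq) eqxx; split; first exact: ltn_ord.
  have ew : w = (r * p)%N.
    apply/eqP; rewrite -(eqn_pmul2r q0) hw; apply/eqP; rewrite -!multE; lia.
  have -> : (b%:Z * w%:Z - k) = - (k - (N3 (a, b, c))%:Z) - q%:Z * (a%:Z * r%:Z + c%:Z * p%:Z).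
    by rewrite ew /N3 /=; iarith.
  apply: rpredB; first by rewrite rpredN; apply: hdiv; rewrite mulnAC; apply/dvdn_mull/dvdnn.
  by apply: dvdz_mulr; apply: dvdzz.
- rewrite eq_sym (negbTE hpr) eq_sym (negbTE hqr); split; first exact: ltn_ord.
  have ew : w = (p * q)%N.
    apply/eqP; rewrite -(eqn_pmul2r r0) hw; apply/eqP; rewrite -!multE; lia.
  have -> : (c%:Z * w%:Z - k) = - (k - (N3 (a, b, c))%:Z) - r%:Z * (a%:Z * q%:Z + b%:Z * p%:Z).
    by rewrite ew /N3 /=; iarith.
  apply: rpredB; first by rewrite rpredN; apply: hdiv; apply/dvdn_mull/dvdnn.
  by apply: dvdz_mulr; apply: dvdzz.
Qed.

Lemma shift_dvd (n w X X' : nat) (k s d : int) : coprime w n ->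
  (n%:Z %| X%:Z * w%:Z - k)%Z -> (n%:Z %| X'%:Z * w%:Z - (k - s))%Z ->
  (n%:Z %| d * w%:Z - s)%Z -> (n%:Z %| X'%:Z - X%:Z + d)%Z.
Proof.
move=> cwn h1 h2 h3.
have h : (n%:Z %| (X'%:Z - X%:Z + d) * w%:Z)%Z.
  have -> : (X'%:Z - X%:Z + d) * w%:Z =
     (X'%:Z * w%:Z - (k - s)) - (X%:Z * w%:Z - k) + (d * w%:Z - s) by iarith.
  by apply: rpredD => //; apply: rpredB.
by move: h; rewrite Gauss_dvdzl // coprimez_nat coprime_sym.
Qed.

Lemma e_cases (t x y d e : Z) : (0 < t)%ZZ -> (0 <= x < t)%ZZ -> (0 <= y < t)%ZZ ->
  (0 <= d < 2*t)%ZZ -> (y - x + d = e * t)%ZZ ->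
  ((d <= x -> e = 0) /\ (d - t <= x < d -> e = 1) /\ (x < d - t -> e = 2))%ZZ.
Proof.
move=> ht hx hy hd h.
have : (-1 < e < 3)%ZZ by nia.
move=> he; have : (e = 0 \/ e = 1 \/ e = 2)%ZZ by lia.
case=> [E|[E|E]]; subst e; lia.
Qed.

Lemma Gval (t x0 x1 x2 x3 : nat) (E : int) : (0 < t)%N ->
  x0%:Z - x1%:Z - x2%:Z + x3%:Z = E * t%:Z ->
  x0%:R / t%:R - x1%:R / t%:R - x2%:R / t%:R + x3%:R / t%:R = E%:~R :> rat.
Proof.
move=> t0 /(congr1 (fun z : int => z%:~R : rat)); rewrite intrM !(intrD, intrB, intrN) => h.
rewrite -!mulrBl -mulrDl.
have -> : (x0%:R - x1%:R - x2%:R + x3%:R : rat) = E%:~R * t%:R by exact: h.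
by rewrite mulfK // pnatr_eq0 -lt0n.
Qed.

Lemma rearrL (V : zmodType) (a b c d : V) : (a - b) - (c - d) = (a - c) - (b - d).
Proof. by rewrite !opprD !opprK addrACA. Qed.
Lemma rearrL2 (V : zmodType) (a b c d : V) : (a - b) + (c - d) = (a + c) - (b + d).
Proof. by rewrite opprD addrACA. Qed.
Lemma rearr (V : zmodType) (A0 A1 A2 A3 K0 K1 K2 K3 : V) :
  (A0 - K0) - (A1 - K1) - (A2 - K2) + (A3 - K3) = (A0 - A1 - A2 + A3) - (K0 - K1 - K2 + K3).
Proof. by rewrite (rearrL _ A0 K0 A1 K1) (rearrL _ (A0 - A1) (K0 - K1) A2 K2) rearrL2. Qed.

Definition g (p q r n : nat) (k : int) : rat := (coord p q r n k)%:R / n%:R.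

Lemma F_sum p q r k : p != q -> q != r -> p != r ->
  F p q r k = \sum_(n <- [:: p; q; r]) g p q r n k - k%:~R / (p * q * r)%N%:R.
Proof.
move=> hpq hqr hpr.
rewrite /F !big_cons big_nil addr0 /g /coord eqxx eq_sym (negbTE hpq) eqxx.
by rewrite eq_sym (negbTE hpr) eq_sym (negbTE hqr) !addrA.
Qed.

Ltac zsimpin H := rewrite ?(zI_natD, zI_natM, zI_sub, zI_add, zI_mul, zI_opp, zI_0, zI_1, zI_nat, maxnE', minnE') in H.

Lemma gzero (a b : rat) : a - b - a + b = 0.
Proof. by rewrite (addrAC a) subrr sub0r addNr. Qed.
Lemma gzero2 (a b : rat) : a - a - b + b = 0.
Proof. by rewrite subrr sub0r addNr. Qed.

Theorem lemma3 (p q r : nat) :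
  prime p -> prime q -> prime r ->
  p != q -> q != r -> p != r ->
  (p < q)%N -> (p < r)%N ->
  forall (t u v : nat), perm_eq [:: t; u; v] [:: p; q; r] ->
  forall (u' v' : nat),
    (1 <= u' < t)%N -> (1 <= v' < t)%N ->
    (u * u' = 1 %[mod t])%N -> (v * v' = 1 %[mod t])%N ->
  let M : int := (maxn u' v')%:Z in
  let m : int := (minn u' v')%:Z in
  forall k : int,
  let x : int := (if t == p then a_ p q r k
                  else if t == q then b_ p q r k
                  else c_ p q r k)%:Z in
  let D : rat := F p q r k - F p q r (k - u%:Z) - F p q r (k - v%:Z)
                 + F p q r (k - u%:Z - v%:Z) in
  [/\ x < M + m - t%:Z -> D = 0,
      M + m - t%:Z <= x < m -> D = -1,
      m <= x < M -> D = 0,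
      M <= x < M + m -> D = 1
    & M + m <= x -> D = 0].
Proof.
move=> pp pq pr hpq hqr hpr _ _ t u v H u' v' hu' hv' hu hv M m k x D.
have primeP : forall n, n \in [:: p; q; r] -> prime n.
  by move=> n; rewrite !inE => /or3P [/eqP->|/eqP->|/eqP->].
have mt : t \in [:: p; q; r] by rewrite -(perm_mem H) !inE eqxx.
have mu : u \in [:: p; q; r] by rewrite -(perm_mem H) !inE eqxx orbT.
have mv : v \in [:: p; q; r] by rewrite -(perm_mem H) !inE eqxx !orbT.
have pt := primeP t mt; have pu := primeP u mu; have pv := primeP v mv.
have t0 := prime_gt0 pt.
have Uq : uniq [:: t; u; v].
  by rewrite (perm_uniq H) /= !inE negb_or hpq hpr hqr.
move: Uq => /= /and3P [] ; rewrite !inE negb_or => /andP [tu tv] uv _.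
have hP : (t * u * v = p * q * r)%N.
  have := @perm_big nat muln 1%N _ _ _ xpredT id H.
  rewrite !big_cons !big_nil /= => hP.
  move: hP; rewrite -!multE => hP; lia.
have Ct : forall j, (coord p q r t j < t)%N /\ (t%:Z %| (coord p q r t j)%:Z * (u * v)%N%:Z - j)%Z.
  move=> j; apply: coord_prop => //; rewrite -hP -!multE; lia.
have Cu : forall j, (coord p q r u j < u)%N /\ (u%:Z %| (coord p q r u j)%:Z * (t * v)%N%:Z - j)%Z.
  move=> j; apply: coord_prop => //; rewrite -hP -!multE; lia.
have Cv : forall j, (coord p q r v j < v)%N /\ (v%:Z %| (coord p q r v j)%:Z * (t * u)%N%:Z - j)%Z.
  move=> j; apply: coord_prop => //; rewrite -hP -!multE; lia.
have copt : coprime (u * v) t by apply: prime_coprime2.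
have copu : coprime (t * v) u by apply: prime_coprime2; rewrite // eq_sym.
have copv : coprime (t * u) v by apply: prime_coprime2; rewrite // eq_sym.
have E1u : coord p q r u (k - u%:Z) = coord p q r u k.
  have := shift_dvd _ _ _ _ _ _ 0 copu (Cu k).2 (Cu (k - u%:Z)).2.
  rewrite mul0r sub0r rpredN dvdzz addr0 => /(_ isT) h.
  exact: bounded_eq h (Cu _).1 (Cu _).1.
have E2u : coord p q r u (k - u%:Z - v%:Z) = coord p q r u (k - v%:Z).
  have e : k - u%:Z - v%:Z = k - v%:Z - u%:Z by iarith.
  have := shift_dvd _ _ _ _ _ _ 0 copu (Cu (k - v%:Z)).2 (Cu (k - v%:Z - u%:Z)).2.
  rewrite mul0r sub0r rpredN dvdzz addr0 => /(_ isT) h.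
  rewrite e; exact: bounded_eq h (Cu _).1 (Cu _).1.
have E1v : coord p q r v (k - v%:Z) = coord p q r v k.
  have := shift_dvd _ _ _ _ _ _ 0 copv (Cv k).2 (Cv (k - v%:Z)).2.
  rewrite mul0r sub0r rpredN dvdzz addr0 => /(_ isT) h.
  exact: bounded_eq h (Cv _).1 (Cv _).1.
have E2v : coord p q r v (k - u%:Z - v%:Z) = coord p q r v (k - u%:Z).
  have := shift_dvd _ _ _ _ _ _ 0 copv (Cv (k - u%:Z)).2 (Cv (k - u%:Z - v%:Z)).2.
  rewrite mul0r sub0r rpredN dvdzz addr0 => /(_ isT) h.
  exact: bounded_eq h (Cv _).1 (Cv _).1.
have hvt := eqmod_dvd _ _ _ hv; have hut := eqmod_dvd _ _ _ hu.
have dd1 : (t%:Z %| v'%:Z * (u * v)%N%:Z - u%:Z)%Z.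
  have -> : v'%:Z * (u * v)%N%:Z - u%:Z = u%:Z * ((v * v')%N%:Z - 1%N%:Z) by iarith.
  exact: dvdz_mull.
have dd2 : (t%:Z %| u'%:Z * (u * v)%N%:Z - v%:Z)%Z.
  have -> : u'%:Z * (u * v)%N%:Z - v%:Z = v%:Z * ((u * u')%N%:Z - 1%N%:Z) by iarith.
  exact: dvdz_mull.
have dd3 : (t%:Z %| (u'%:Z + v'%:Z) * (u * v)%N%:Z - (u%:Z + v%:Z))%Z.
  have -> : (u'%:Z + v'%:Z) * (u * v)%N%:Z - (u%:Z + v%:Z) =
     v%:Z * ((u * u')%N%:Z - 1%N%:Z) + u%:Z * ((v * v')%N%:Z - 1%N%:Z) by iarith.
  by apply: rpredD; apply: dvdz_mull.
have h1 := shift_dvd _ _ _ _ _ _ _ copt (Ct k).2 (Ct (k - u%:Z)).2 dd1.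
have h2 := shift_dvd _ _ _ _ _ _ _ copt (Ct k).2 (Ct (k - v%:Z)).2 dd2.
have e3 : k - u%:Z - v%:Z = k - (u%:Z + v%:Z) by iarith.
have h3 := shift_dvd _ _ _ _ _ _ _ copt (Ct k).2 (Ct (k - (u%:Z + v%:Z))).2 dd3.
rewrite -e3 in h3.
case/dvdzP: h1 => f1 hf1; case/dvdzP: h2 => f2 hf2; case/dvdzP: h3 => f3 hf3.
have hD : D = (f3 - f1 - f2)%:~R.
  rewrite /D !F_sum // rearr.
  have -> : (k%:~R / (p * q * r)%N%:R - (k - u%:Z)%:~R / (p * q * r)%N%:R
      - (k - v%:Z)%:~R / (p * q * r)%N%:R + (k - u%:Z - v%:Z)%:~R / (p * q * r)%N%:R : rat) = 0.
    rewrite -!mulrBl -mulrDl -!intrB -intrD.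
    have -> : k - (k - u%:Z) - (k - v%:Z) + (k - u%:Z - v%:Z) = 0 by iarith.
    by rewrite mul0r.
  rewrite subr0 -sumrB -sumrB -big_split /=.
  rewrite (perm_big [:: t; u; v]) /=; last by rewrite perm_sym.
  rewrite !big_cons big_nil addr0 /g E1u E2u E1v E2v gzero gzero2 !addr0.
  apply: Gval => //.
  by rewrite !mulrBl -hf1 -hf2 -hf3; iarith.
have xE : x = (coord p q r t k)%:Z by [].
have ME : M = (maxn u' v')%:Z by [].
have mE : m = (minn u' v')%:Z by [].
move: hf1 => /(congr1 zI) Z1; zsimpin Z1.
move: hf2 => /(congr1 zI) Z2; zsimpin Z2.
move: hf3 => /(congr1 zI) Z3; zsimpin Z3.
have b0 := (Ct k).1; have b1 := (Ct (k - u%:Z)).1; have b2 := (Ct (k - v%:Z)).1;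
have b3 := (Ct (k - u%:Z - v%:Z)).1.
move/ssrnat.ltP: b0 => b0; move/ssrnat.ltP: b1 => b1; move/ssrnat.ltP: b2 => b2;
move/ssrnat.ltP: b3 => b3; move/ssrnat.ltP: t0 => t0'.
case/andP: hu' => /ssrnat.ltP hu1 /ssrnat.ltP hu2.
case/andP: hv' => /ssrnat.ltP hv1 /ssrnat.ltP hv2.
have EC1 := Z1; apply e_cases in EC1; [|lia|lia|lia|lia].
have EC2 := Z2; apply e_cases in EC2; [|lia|lia|lia|lia].
have EC3 := Z3; apply e_cases in EC3; [|lia|lia|lia|lia].
rewrite hD xE ME mE; split.
- move/zI_lt; zsimp => hc.
  have -> : f3 - f1 - f2 = 0 by iarith.
  by [].
- case/andP => /zI_le hc1 /zI_lt hc2; zsimpin hc1; zsimpin hc2.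
  have -> : f3 - f1 - f2 = -1 by iarith.
  by [].
- case/andP => /zI_le hc1 /zI_lt hc2; zsimpin hc1; zsimpin hc2.
  have -> : f3 - f1 - f2 = 0 by iarith.
  by [].
- case/andP => /zI_le hc1 /zI_lt hc2; zsimpin hc1; zsimpin hc2.
  have -> : f3 - f1 - f2 = 1 by iarith.
  by [].
- move/zI_le; zsimp => hc.
  have -> : f3 - f1 - f2 = 0 by iarith.
  by [].
Qed.
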